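(* For all integers $n\le d\le r\le R_{\mathrm{typ\text{-}max}}(n,d,n)$, there exist matrices $\mathbf A,\mathbf C\in\mathbb{R}^{n\times r}$, $\mathbf B\in\mathbb{R}^{d\times r}$ and a vector $\mathbf h_0\in\mathbb{R}^n$ such that the CP rank of $[\![\mathbf A,\mathbf B,\mathbf C]\!]$ equals $r$ and $\operatorname{rank}(\mathbf B\,\mathrm{diag}(\mathbf A^\top\mathbf h_0)\mathbf C^\top)=\operatorname{rank}(\tanh(\mathbf B\,\mathrm{diag}(\mathbf A^\top\mathbf h_0)\mathbf C^\top))=n$, where $\tanh$ is applied componentwise.
   Context: For $\mathbf A\in\mathbb{R}^{n\times r},\mathbf B\in\mathbb{R}^{d\times r},\mathbf C\in\mathbb{R}^{n\times r}$ with columns $\mathbf a_s,\mathbf b_s,\mathbf c_s$, $[\![\mathbf A,\mathbf B,\mathbf C]\!]=\sum_{s=1}^r\mathbf a_s\circ\mathbf b_s\circ\mathbf c_s\in\mathbb{R}^{n\times d\times n}$. The CP rank of a tensor is the least number of rank-one (outer product) terms summing to it. A typical rank of $\mathbb{R}^{n\times d\times n}$ is a value $R$ such that the set of tensors of CP rank $R$ has positive Lebesgue measure; $R_{\mathrm{typ\text{-}max}}(n,d,n)$ is the largest typical rank. *)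

(* Defs.v *)
From mathcomp Require Import all_boot all_order all_algebra.
From mathcomp Require Import reals sequences exp.
Set Implicit Arguments. Unset Strict Implicit. Unset Printing Implicit Defensive.
Import Order.TTheory GRing.Theory Num.Theory.
Local Open Scope ring_scope.

Section Defs.
Variable R : realType.

Definition tidx (n d : nat) : finType := ('I_n * 'I_d * 'I_n)%type.
Definition tensor (n d : nat) := {ffun tidx n d -> R}.

Definition cp_tensor (n d r : nat) (A : 'M[R]_(n, r)) (B : 'M[R]_(d, r))
  (C : 'M[R]_(n, r)) : tensor n d :=
  [ffun ijk : tidx n d =>
     \sum_(s < r) A ijk.1.1 s * B ijk.1.2 s * C ijk.2 s].

Definition cp_decomposable (n d : nat) (T : tensor n d) (r : nat) : Prop :=
  exists (A : 'M[R]_(n, r)) (B : 'M[R]_(d, r)) (C : 'M[R]_(n, r)),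
    T = cp_tensor A B C.

Definition has_cp_rank (n d : nat) (T : tensor n d) (r : nat) : Prop :=
  cp_decomposable T r /\ forall s, (s < r)%N -> ~ cp_decomposable T s.

Definition box_vol (I : finType) (a b : I -> R) : R := \prod_(i : I) (b i - a i).

Definition lebesgue_null (I : finType) (S : {ffun I -> R} -> Prop) : Prop :=
  forall eps : R, 0 < eps ->
    exists (a b : nat -> I -> R),
      (forall k i, a k i <= b k i) /\
      (forall x, S x -> exists k, forall i, a k i <= x i <= b k i) /\
      (forall N, \sum_(k < N) box_vol (a k) (b k) < eps).

Definition pos_lebesgue (I : finType) (S : {ffun I -> R} -> Prop) : Prop :=
  ~ lebesgue_null S.

Definition typical_rank (n d R0 : nat) : Prop :=
  pos_lebesgue (fun T : tensor n d => has_cp_rank T R0).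

Definition is_typ_max_rank (n d Rm : nat) : Prop :=
  typical_rank n d Rm /\ forall R0, typical_rank n d R0 -> (R0 <= Rm)%N.

Definition tanhR (x : R) : R := (expR x - expR (- x)) / (expR x + expR (- x)).

End Defs.

(* Main.v *)
Require Import Defs.
From mathcomp Require Import all_boot all_order all_algebra.
From mathcomp Require Import reals sequences exp.
From Stdlib Require Import Classical ClassicalEpsilon.
From mathcomp Require Import ring lra.
Set Implicit Arguments. Unset Strict Implicit. Unset Printing Implicit Defensive.
Import Order.TTheory GRing.Theory Num.Theory.
Local Open Scope ring_scope.

Section Alg.
Variable R : realType.
Variables n d : nat.
Local Notation I := (tidx n d).
Local Notation T := (tensor R n d).

Lemma cp_rowE s1 s2 (A1 : 'M[R]_(n, s1)) (B1 : 'M[R]_(d, s1)) (C1 : 'M[R]_(n, s1))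
  (A2 : 'M[R]_(n, s2)) (B2 : 'M[R]_(d, s2)) (C2 : 'M[R]_(n, s2)) :
  cp_tensor (row_mx A1 A2) (row_mx B1 B2) (row_mx C1 C2) =
  cp_tensor A1 B1 C1 + cp_tensor A2 B2 C2.
Proof.
apply/ffunP => x; rewrite !ffunE big_split_ord /=.
case: x => [[i0 j0] k0] /=.
by congr (_ + _); apply: eq_bigr => i _; rewrite ?row_mxEl ?row_mxEr.
Qed.

Lemma dec_add (X Y : T) s1 s2 : cp_decomposable X s1 -> cp_decomposable Y s2 ->
  cp_decomposable (X + Y) (s1 + s2).
Proof.
move=> [A1 [B1 [C1 ->]]] [A2 [B2 [C2 ->]]].
by exists (row_mx A1 A2), (row_mx B1 B2), (row_mx C1 C2); rewrite cp_rowE.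
Qed.

Lemma dec0 s : cp_decomposable (0 : T) s.
Proof.
exists 0, 0, 0; apply/ffunP => x; rewrite !ffunE.
by rewrite big1 // => i _; rewrite !mxE !mul0r.
Qed.

Lemma dec_pad (X : T) s s' : cp_decomposable X s -> (s <= s')%N -> cp_decomposable X s'.
Proof.
move=> h les; rewrite -(subnKC les) -[X]addr0; exact: dec_add h (dec0 _).
Qed.

Definition elem (x : I) (v : R) : T := [ffun y => if y == x then v else 0].

Lemma dec_elem x v : cp_decomposable (elem x v) 1.
Proof.
exists (\matrix_(i < n, s < 1) ((i == x.1.1)%:R * v : R)), (\matrix_(j < d, s < 1) ((j == x.1.2)%:R : R)),
  (\matrix_(k < n, s < 1) ((k == x.2)%:R : R)).
apply/ffunP => y; rewrite !ffunE big_ord1 !mxE.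
case: y => [[i j] k]; case: x => [[i' j'] k'] /=.
rewrite !xpair_eqE.
by case: (i == i'); case: (j == j'); case: (k == k'); rewrite /= ?(mul1r, mul0r, mulr0, mulr1).
Qed.

Definition mode3 (S : 'M[R]_n) (X : T) : T :=
  [ffun x : I => \sum_(l < n) S x.2 l * X (x.1, l)].

Lemma mode3_cp r (S : 'M[R]_n) (A : 'M[R]_(n, r)) (B : 'M[R]_(d, r)) (C : 'M[R]_(n, r)) :
  mode3 S (cp_tensor A B C) = cp_tensor A B (S *m C).
Proof.
apply/ffunP => x; rewrite !ffunE.
under eq_bigr do rewrite ffunE big_distrr.
rewrite exchange_big /=; apply: eq_bigr => s _; rewrite mxE big_distrr.
by apply: eq_bigr => l _; rewrite /=; ring.
Qed.

Lemma rank_mode3 r (S : 'M[R]_n) (A : 'M[R]_(n, r)) (B : 'M[R]_(d, r)) (C : 'M[R]_(n, r)) Rk :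
  S \in unitmx -> has_cp_rank (cp_tensor A B C) Rk ->
  has_cp_rank (cp_tensor A B (S *m C)) Rk.
Proof.
move=> Su [[A1 [B1 [C1 e1]]] hmin]; split.
  by exists A1, B1, (S *m C1); rewrite -!mode3_cp e1.
move=> s ls [A2 [B2 [C2 e2]]]; apply: (hmin s ls).
exists A2, B2, (invmx S *m C2).
by rewrite -mode3_cp -e2 mode3_cp mulmxA mulVmx // mul1mx.
Qed.

End Alg.

Section Null.
Variable R : realType.
Variable I : finType.
Variable i0 : I.
Local Notation F := {ffun I -> R}.
Local Notation bx := (F * F)%type.

Definition bvol (p : bx) := box_vol p.1 p.2.
Definition bok (p : bx) := forall i, p.1 i <= p.2 i.
Definition inbx (p : bx) (x : F) := forall i, p.1 i <= x i <= p.2 i.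

Lemma bvol_ge0 p : bok p -> 0 <= bvol p.
Proof. by move=> h; rewrite /bvol /box_vol; apply: prodr_ge0 => i _; rewrite subr_ge0. Qed.

Lemma bvol0 : bvol (0, 0) = 0.
Proof. by rewrite /bvol /box_vol (bigD1 i0) //= !ffunE subrr mul0r. Qed.

Lemma geom_sum (eps : R) m : \sum_(K < m) eps / 2 ^+ K.+1 = eps - eps / 2 ^+ m.
Proof.
elim: m => [|m IH]; first by rewrite big_ord0 expr0 divr1 subrr.

rewrite big_ord_recr /= IH exprS.
have h2 : (2 : R) ^+ m != 0 by rewrite gt_eqF // exprn_gt0.
field; by rewrite h2.
Qed.

Lemma null_of_levels (S : F -> Prop) :
  (forall (K : nat) (eta : R), 0 < eta -> exists s : seq bx,
     [/\ forall p, p \in s -> bok p,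
         forall x, S x -> (forall i, `|x i| <= K.+1%:R) -> exists2 p, p \in s & inbx p x
       & \sum_(p <- s) bvol p < eta]) -> lebesgue_null S.
Proof.
move=> H eps eps0.
have etap K : 0 < eps / 2 ^+ K.+1 by rewrite divr_gt0 // exprn_gt0.
pose s K := proj1_sig (constructive_indefinite_description _ (H K _ (etap K))).
have sP : forall K, [/\ forall p, p \in s K -> bok p,
         forall x, S x -> (forall i, `|x i| <= K.+1%:R) -> exists2 p, p \in s K & inbx p x
       & \sum_(p <- s K) bvol p < eps / 2 ^+ K.+1].
  by move=> K; exact: (proj2_sig (constructive_indefinite_description _ (H K _ (etap K)))).
pose L K := (0, 0) :: s K.
pose FF k := flatten [seq L K | K <- iota 0 k.+1].
have FFok k p : p \in FF k -> bok p.
  move=> /flatten_mapP [K _]; rewrite in_cons => /orP [/eqP -> i|]; first by rewrite ffunE.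
  by case: (sP K) => h _ _; apply: h.
have sizeFF k : (k < size (FF k))%N.
  rewrite /FF size_flatten /shape -map_comp sumnE big_map.
  apply: (@leq_trans (\sum_(j <- iota 0 k.+1) 1)); last by apply: leq_sum => i _.
  by rewrite sum1_size size_iota.
have FFcat a b : (a <= b)%N -> exists t, FF b = FF a ++ t.
  move=> lab; exists (flatten [seq L K | K <- iota a.+1 (b - a)]).
  by rewrite /FF -flatten_cat -map_cat -{1}(subnKC lab) -addSn iotaD add0n.
have FFnth a b q : (q < size (FF a))%N -> (q < size (FF b))%N ->
    nth (0, 0) (FF a) q = nth (0, 0) (FF b) q.
  wlog lab : a b / (a <= b)%N.
    move=> W qa qb; case: (leqP a b) => l; first exact: W.
    by symmetry; apply: W => //; apply: ltnW.
  by move=> qa _; case: (FFcat a b lab) => t ->; rewrite nth_cat qa.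
exists (fun k i => (nth (0, 0) (FF k) k).1 i), (fun k i => (nth (0, 0) (FF k) k).2 i).
split; [|split].
- move=> k i; have := FFok k (nth (0, 0) (FF k) k) (mem_nth _ (sizeFF k)).
  by apply.
- move=> x Sx.
  have [K hK] : exists K : nat, forall i, `|x i| <= K.+1%:R.
    have s0 : 0 <= \sum_i `|x i| by apply: sumr_ge0 => i _.
    exists (Num.Def.archi_bound (\sum_i `|x i|)) => i.
    have hs : `|x i| <= \sum_j `|x j|.
      by rewrite (bigD1 i) //= lerDl sumr_ge0.
    apply: (le_trans hs); apply: ltW; apply: (lt_le_trans (archi_boundP s0)).
    by rewrite ler_nat.
  case: (sP K) => _ hc _; have [p ps px] := hc x Sx hK.
  have pF : p \in FF K.
    apply/flatten_mapP; exists K; first by rewrite mem_iota /= add0n.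
    by rewrite in_cons ps orbT.
  exists (index p (FF K)) => i.
  rewrite (FFnth _ K _ (sizeFF _)) ?index_mem // nth_index //; exact: px.
- move=> N.
  have e1 : \sum_(k < N) box_vol (fun i => (nth (0, 0) (FF k) k).1 i) (fun i => (nth (0, 0) (FF k) k).2 i)
        = \sum_(k < N) bvol (nth (0, 0) (FF N) k).
    apply: eq_bigr => k _; rewrite /bvol (FFnth _ N _ (sizeFF _)) //.
    exact: (ltn_trans (ltn_ord k) (sizeFF N)).
  rewrite e1.
  have e2 : \sum_(k < N) bvol (nth (0, 0) (FF N) k) <= \sum_(p <- FF N) bvol p.
    rewrite (big_nth (0, 0)) -(subnKC (ltnW (sizeFF N))) big_mkord.
    rewrite big_split_ord /= lerDl; apply: sumr_ge0 => i _; apply: bvol_ge0.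
    apply: FFok; apply: mem_nth; move: (ltn_ord i); rewrite ltn_subRL; exact.
  apply: (le_lt_trans e2).
  rewrite /FF big_flatten big_map /=.
  apply: (@lt_le_trans _ _ (\sum_(K <- iota 0 N.+1) eps / 2 ^+ K.+1)).
    apply: ltr_sum; first by [].
    move=> K _; rewrite big_cons bvol0 add0r; by case: (sP K).
  rewrite -(subn0 N.+1) -/(index_iota 0 N.+1) big_mkord geom_sum.
  by rewrite lerBlDr lerDl; apply: divr_ge0; [apply: ltW | apply: exprn_ge0].
Qed.

Definition incube (K : R) (x : F) := forall i, `|x i| <= K.

Definition gidx (M : nat) (K dl x : R) : 'I_M.+1 := inord (Num.trunc ((x + K) / dl)).

Lemma grid_approx (M : nat) (K x : R) : 0 < K -> (0 < M)%N -> `|x| <= K ->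
  `|x - (- K + (gidx M K (2 * K / M%:R) x)%:R * (2 * K / M%:R))| <= 2 * K / M%:R
  /\ `|- K + (gidx M K (2 * K / M%:R) x)%:R * (2 * K / M%:R)| <= K.
Proof.
move=> K0 M0 xK; set dl := 2 * K / M%:R.
have Mr : 0 < M%:R :> R by rewrite ltr0n.
have dl0 : 0 < dl by rewrite divr_gt0 // mulr_gt0.
move: xK; rewrite ler_norml => /andP [xl xu].
set y := (x + K) / dl.
have y0 : 0 <= y by apply: divr_ge0; [lra | exact: ltW].
have yM : y <= M%:R.
  rewrite /y ler_pdivrMr // /dl mulrCA divff ?gt_eqF // mulr1; lra.
have [t1 t2] := andP (truncn_itv y0).
have tM : (Num.trunc y <= M)%N.
  by rewrite -ltnS truncn_lt_nat // (le_lt_trans yM) // ltr_nat.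
rewrite /gidx -/y inordK //.
have ex : x - (- K + (Num.trunc y)%:R * dl) = (y - (Num.trunc y)%:R) * dl.
  by rewrite /y mulrBl mulfVK ?gt_eqF //; ring.
split.
  rewrite ex ger0_norm; last by apply: mulr_ge0; [rewrite subr_ge0 | apply: ltW].
  rewrite -[X in _ <= X]mul1r ler_pM2r //; rewrite -natr1 in t2; lra.
have h1 : 0 <= (Num.trunc y)%:R * dl by apply: mulr_ge0 (ler0n _ _) (ltW dl0).
have h2 : (Num.trunc y)%:R * dl <= 2 * K.
  have -> : 2 * K = M%:R * dl by rewrite /dl mulrCA divff ?gt_eqF // mulr1.
  by rewrite ler_pM2r // ler_nat.
rewrite ler_norml; apply/andP; split; lra.
Qed.

Lemma grid_cover (K L : R) (Phi : F -> F) : 0 < K -> 0 <= L ->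
  (forall p q (dl : R), 0 <= dl -> incube K p -> incube K q ->
     (forall i, i != i0 -> `|p i - q i| <= dl) -> forall i, `|Phi p i - Phi q i| <= L * dl) ->
  forall eta, 0 < eta -> exists s : seq bx,
    [/\ forall b, b \in s -> bok b,
        forall p, incube K p -> exists2 b, b \in s & inbx b (Phi p)
      & \sum_(b <- s) bvol b < eta].
Proof.
move=> K0 L0 HPhi eta eta0.
have [N' eN] : exists N', #|I| = N'.+1.
  by exists #|I|.-1; rewrite prednK //; apply/card_gt0P; exists i0.
pose c := 2 ^+ N' * (4 * L * K) ^+ N'.+1.
have c0 : 0 <= c by rewrite mulr_ge0 // exprn_ge0 // !mulr_ge0 // ltW.
pose M := (Num.Def.archi_bound (c / eta)).+1.
have M0 : (0 < M)%N by [].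
have Mr : 0 < M%:R :> R by rewrite ltr0n.
pose dl := 2 * K / M%:R.
have dl0 : 0 < dl by rewrite divr_gt0 // mulr_gt0.
pose G := {ffun {i : I | i != i0} -> 'I_M.+1}.
pose q (g : G) : F := [ffun i => if (insub i : option {i : I | i != i0}) is Some i'
   then - K + (g i')%:R * dl else 0].
have qc g : incube K (q g).
  move=> i; rewrite ffunE; case: insubP => [i' _ _|_]; last by rewrite normr0 ltW.
  have gl : ((g i')%:R <= M%:R :> R) by rewrite ler_nat -ltnS.
  have h1 : 0 <= (g i')%:R * dl by apply: mulr_ge0 (ler0n _ _) (ltW dl0).
  have h2 : (g i')%:R * dl <= 2 * K.
    have -> : 2 * K = M%:R * dl by rewrite /dl mulrCA divff ?gt_eqF // mulr1.
    by rewrite ler_pM2r.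
  rewrite ler_norml; apply/andP; split; lra.
pose box (g : G) : bx := ([ffun i => Phi (q g) i - L * dl], [ffun i => Phi (q g) i + L * dl]).
exists [seq box g | g <- enum G]; split.
- move=> b /mapP [g _ ->] i; rewrite !ffunE lerD2l.
  have : 0 <= L * dl by rewrite mulr_ge0 // ltW.
  lra.
- move=> p pc.
  pose g : G := [ffun i' => gidx M K dl (p (val i'))].
  exists (box g); first by apply: map_f; rewrite mem_enum.
  have hpq : forall i, i != i0 -> `|p i - q g i| <= dl.
    move=> i ii0; rewrite ffunE insubT /= ffunE.
    by case: (grid_approx K0 M0 (pc i)).
  move=> i; have := HPhi p (q g) dl (ltW dl0) pc (qc g) hpq i.
  rewrite !ffunE ler_norml => /andP [h1 h2]; apply/andP; split; lra.
- rewrite big_map big_enum /=.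
  have bv g : bvol (box g) = (2 * L * dl) ^+ #|I|.
    rewrite /bvol /box_vol -prodr_const; apply: eq_bigr => i _; rewrite !ffunE; ring.
  under eq_bigr do rewrite bv.
  rewrite sumr_const card_ffun card_ord card_sig cardC1 eN /=.
  rewrite -(mulr_natr ((2 * L * dl) ^+ N'.+1)) natrX.
  have hM : (M.+1%:R : R) ^+ N' <= (2 * M%:R) ^+ N'.
    apply: lerXn2r; rewrite ?nnegrE ?ler0n ?mulr_ge0 ?ler0n //.
    rewrite -natr1; have : (1 : R) <= M%:R by rewrite ler1n.
    lra.
  have e : (2 * L * dl) ^+ N'.+1 * (2 * M%:R) ^+ N' = c / M%:R.
    have -> : 2 * L * dl = (4 * L * K) / M%:R.
      by rewrite /dl; field; rewrite gt_eqF.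
    rewrite expr_div_n [(2 * M%:R) ^+ N']exprMn /c [(M%:R : R) ^+ N'.+1]exprS.
    have : (M%:R : R) ^+ N' != 0 by rewrite expf_neq0 // gt_eqF.
    move: ((M%:R : R) ^+ N') ((4 * L * K) ^+ N'.+1) ((2 : R) ^+ N') => z w t z0.
    by field; rewrite z0 gt_eqF.
  have pos : 0 <= (2 * L * dl) ^+ N'.+1.
    by apply: exprn_ge0; apply: mulr_ge0 (ltW dl0); apply: mulr_ge0.
  apply: (le_lt_trans (ler_wpM2l pos hM)); rewrite e.
  have hb : c / eta < M%:R.
    apply: (lt_trans (archi_boundP _)); first by rewrite divr_ge0 // ltW.
    by rewrite ltr_nat.
  rewrite ltr_pdivrMr // mulrC -ltr_pdivrMr //.
Qed.
End Null.

Section Det.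
Variable R : realType.
Variables n' d : nat.
Local Notation n := n'.+1.
Hypothesis hnd : (n <= d)%N.
Local Notation I := (tidx n d).
Local Notation F := {ffun I -> R}.

Definition wd (j : 'I_n) : 'I_d := widen_ord hnd j.
Definition blk (x : F) : 'M[R]_n := \matrix_(j, k) x (ord0, wd j, k).
Definition inrow (c : 'I_n) (y : I) := (y.1.1 == ord0) && (y.1.2 == wd c).
Definition Phi (c : 'I_n) (p : F) : F := [ffun y : I => if inrow c y
  then - \sum_(j | j != c) p (ord0, wd c, j) * p (ord0, wd j, y.2) else p y].

Lemma wd_inj : injective wd.
Proof. by move=> a b /(congr1 val) /= /val_inj. Qed.

Lemma Phi_lip (c : 'I_n) (K : R) p q (dl : R) : 0 <= dl -> incube K p -> incube K q ->
  (forall i, i != (ord0, wd c, c) -> `|p i - q i| <= dl) ->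
  forall i, `|Phi c p i - Phi c q i| <= (n%:R * (2 * K) + 1) * dl.
Proof.
move=> dl0 pc qc hd i.
have K0 : 0 <= K by apply: le_trans (normr_ge0 _) (pc i).
rewrite !ffunE; case: ifP => hi.
  rewrite opprK addrC -sumrB.
  apply: (le_trans (ler_norm_sum _ _ _)).
  apply: (@le_trans _ _ (\sum_(j < n | j != c) (2 * K * dl))).
    apply: ler_sum => j jc.
    have ha : (ord0, wd c, j) != (ord0, wd c, c) :> I.
      by rewrite !xpair_eqE !eqxx /=.
    have hb : (ord0, wd j, i.2) != (ord0, wd c, c) :> I.
      rewrite !xpair_eqE !eqxx /=; apply/negP => /andP [/eqP /wd_inj ejc _].
      by move/eqP: jc.
    set a1 := q _; set a2 := q _; set b1 := p _; set b2 := p _.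
    have -> : a1 * a2 - b1 * b2 = a1 * (a2 - b2) + (a1 - b1) * b2 by ring.
    apply: (le_trans (ler_normD _ _)); rewrite !normrM.
    have h1 : `|a2 - b2| <= dl by rewrite distrC; apply: hd.
    have h2 : `|a1 - b1| <= dl by rewrite distrC; apply: hd.
    have h3 : `|a1| <= K by apply: qc.
    have h4 : `|b2| <= K by apply: pc.
    have e1 : `|a1| * `|a2 - b2| <= K * dl by apply: ler_pM.
    have e2 : `|a1 - b1| * `|b2| <= dl * K by apply: ler_pM.
    lra.
  apply: (@le_trans _ _ (\sum_(j < n) (2 * K * dl))).
    by rewrite [X in _ <= X](bigD1 c) //= lerDr !mulr_ge0.
  rewrite sumr_const card_ord -[_ *+ n]mulr_natl.
  have -> : (n%:R * (2 * K) + 1) * dl = n%:R * (2 * K * dl) + dl by ring.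
  by rewrite lerDl.
have hi0 : i != (ord0, wd c, c).
  apply/negP => /eqP ei; move: hi; rewrite ei /inrow /= !eqxx.
  done.
apply: (le_trans (hd _ hi0)).
rewrite -[X in X <= _]mul1r ler_wpM2r // lerDr mulr_ge0 // mulr_ge0 //.
Qed.

Lemma det0_cover (K : R) (x : F) : 1 <= K -> incube K x -> \det (blk x) = 0 ->
  exists c p, incube K p /\ Phi c p = x.
Proof.
move=> K1 xc /eqP /det0P [v v0 vx].
have [c cmax] : exists c : 'I_n, forall j, `|v ord0 j| <= `|v ord0 c|.
  case: (@arg_maxP _ R _ ord0 xpredT (fun i => `|v ord0 i|) isT) => c _ h.
  by exists c => j; apply: h.
have vc : v ord0 c != 0.
  apply: contraNneq v0 => vc0; apply/eqP/rowP => j; rewrite mxE.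
  by have := cmax j; rewrite vc0 normr0 normr_le0 => /eqP.
pose w j := v ord0 j / v ord0 c.
have wb j : `|w j| <= 1.
  rewrite /w normrM normrV ?unitfE // ler_pdivrMr ?normr_gt0 // mul1r; exact: cmax.
have wc : w c = 1 by rewrite /w divff.
exists c, [ffun y : I => if inrow c y then w y.2 else x y]; split.
  move=> y; rewrite ffunE; case: ifP => _; last exact: xc.
  exact: le_trans (wb _) K1.
apply/ffunP => y; rewrite !ffunE; case: ifP => hy; last by rewrite hy.
have hrow j : j != c -> inrow c (ord0, wd j, y.2) = false.
  move=> jc; rewrite /inrow; apply/negbTE/negP => /andP [] _ /eqP /wd_inj ejc.
  by move/eqP: jc.
have hrowc j : inrow c (ord0, wd c, j) = true by rewrite /inrow /= !eqxx.
under eq_bigr => j jc do rewrite !ffunE hrowc hrow //.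
have hsum : \sum_j w j * x (ord0, wd j, y.2) = 0.
  have := congr1 (fun m : 'rV[R]_n => m ord0 y.2) vx; rewrite /= !mxE => h.
  rewrite /w; under eq_bigr do rewrite mulrAC.
  rewrite -mulr_suml.
  have -> : \sum_(i < n) v ord0 i * x (ord0, wd i, y.2) = \sum_j v ord0 j * blk x j y.2.
    by apply: eq_bigr => j _; rewrite /blk mxE.
  by rewrite h mul0r.
move: hsum; rewrite (bigD1 c) //= wc mul1r => hsum.
move: hy; rewrite /inrow => /andP [/eqP e1 /eqP e2].
have -> : y = (ord0, wd c, y.2) by rewrite -e1 -e2 -!surjective_pairing.
rewrite /=; apply/eqP; rewrite eq_sym -subr_eq0 opprK; apply/eqP; exact: hsum.
Qed.

Lemma det_null : lebesgue_null (fun x : F => \det (blk x) = 0).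
Proof.
apply: (@null_of_levels R I (ord0, wd ord0, ord0)) => K eta eta0.
set Kr : R := K.+1%:R.
have K1 : 1 <= Kr by rewrite /Kr ler1n.
have K0 : 0 < Kr by apply: lt_le_trans K1.
have L0 : 0 <= n%:R * (2 * Kr) + 1 by rewrite addr_ge0 // mulr_ge0 // mulr_ge0 // ltW.
have en : 0 < eta / n%:R by rewrite divr_gt0 // ltr0n.
have hc : forall c : 'I_n, exists s : seq ({ffun I -> R} * {ffun I -> R}),
    [/\ forall b, b \in s -> bok b,
        forall p, incube Kr p -> exists2 b, b \in s & inbx b (Phi c p)
      & \sum_(b <- s) bvol b < eta / n%:R].
  move=> c; apply: (@grid_cover R I (ord0, wd c, c) Kr _ (Phi c) K0 L0) => //.
  by move=> p q dl; apply: Phi_lip.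
have [f hf] := fin_all_exists hc.
exists (flatten [seq f c | c <- enum 'I_n]); split.
- move=> b /flatten_mapP [c _ bc]; by case: (hf c) => h _ _; apply: h.
- move=> x hx xc.
  have [c [p [pc <-]]] := det0_cover K1 xc hx.
  case: (hf c) => _ h _; have [b bf bp] := h p pc.
  exists b => //; apply/flatten_mapP; exists c => //; by rewrite mem_enum.
- rewrite big_flatten big_map big_enum /=.
  apply: (@lt_le_trans _ _ (\sum_(c < n) eta / n%:R)).
    apply: ltr_sum; first by apply/hasP; exists ord0; rewrite ?mem_index_enum.
    by move=> c _; case: (hf c).
  by rewrite sumr_const card_ord -[_ *+ n]mulr_natr divfK ?pnatr_eq0.
Qed.

End Det.

Section Main.
Variable R : realType.

Definition tanh1_neq0 : @tanhR R 1 != 0.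
Proof.
rewrite /tanhR mulf_neq0 //.
  rewrite subr_eq0; apply/negP => /eqP e.
  have h1 : 1 < expR (1 : R) by rewrite expR_gt1.
  have h2 : expR (- 1 : R) < 1 by rewrite expR_lt1 oppr_lt0.
  lra.
by rewrite invr_eq0 gt_eqF // addr_gt0 // expR_gt0.
Qed.

Lemma tanh0 : @tanhR R 0 = 0.
Proof. by rewrite /tanhR oppr0 subrr mul0r. Qed.

End Main.

Unset Implicit Arguments.
Set Strict Implicit.

Theorem lemma2 (R : realType) (n d r Rm : nat) :
  is_typ_max_rank R n d Rm ->
  (n <= d)%N -> (d <= r)%N -> (r <= Rm)%N ->
  exists (A : 'M[R]_(n, r)) (B : 'M[R]_(d, r)) (C : 'M[R]_(n, r)) (h0 : 'cV[R]_n),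
    has_cp_rank (cp_tensor A B C) r /\
    \rank (B *m diag_mx (A^T *m h0)^T *m C^T) = n /\
    \rank (map_mx (@tanhR R) (B *m diag_mx (A^T *m h0)^T *m C^T)) = n.
Proof.
move=> [Htyp Hmax] hnd hdr hrR.
case: n hnd Htyp Hmax => [|n'] hnd Htyp Hmax.
  have : typical_rank R 0 d Rm.+1.
    move=> Hn; have [a [b [_ [_ hs]]]] := Hn 1 ltr01.
    have := hs 1%N; rewrite big_ord1 /box_vol big1 ?ltxx // => -[[[m lm] j] k].
    by [].
  by move/Hmax; rewrite ltnn.
set n := n'.+1.
have [T1 [HT1 dT1]] : exists T1 : tensor R n d, has_cp_rank T1 Rm /\ \det (blk hnd T1) != 0.
  apply: NNPP => H; apply: Htyp => eps eps0.
  have [a [b [h1 [h2 h3]]]] := (@det_null R n' d hnd) eps eps0.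
  exists a, b; split => //; split => // x Hx; apply: h2.
  apply: NNPP => dx; apply: H; exists x; split => //; exact/eqP.
case: (HT1) => [[A1 [B1 [C1 eT1]]] _].
rewrite eT1 in HT1 dT1.
set P := blk hnd (cp_tensor A1 B1 C1) in dT1.
have Pu : P \in unitmx by rewrite unitmxE unitfE.
set Sm := (invmx P)^T.
have Su : Sm \in unitmx by rewrite unitmx_tr unitmx_inv.
have HT2 := rank_mode3 Su HT1.
set T2 := cp_tensor A1 B1 (Sm *m C1) in HT2.
have T2blk : forall j k : 'I_n, T2 (ord0, wd hnd j, k) = (j == k)%:R.
  move=> j k; rewrite /T2 -mode3_cp ffunE /=.
  have -> : (j == k)%:R = (P *m invmx P) j k by rewrite mulmxV // mxE.
  by rewrite mxE; apply: eq_bigr => l _; rewrite /Sm /P /blk !mxE mulrC.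
pose A0 : 'M[R]_(n, n) := \matrix_(i, s) (i == ord0)%:R.
pose B0 : 'M[R]_(d, n) := \matrix_(j, s) (j == wd hnd s)%:R.
pose C0 : 'M[R]_(n, n) := \matrix_(k, s) (k == s)%:R.
pose E := cp_tensor A0 B0 C0.
have Eblk : forall j k : 'I_n, E (ord0, wd hnd j, k) = (j == k)%:R.
  move=> j k; rewrite /E ffunE /= (bigD1 k) //= !mxE !eqxx mul1r mulr1 big1 ?addr0.
    by rewrite (inj_eq (wd_inj (hnd:=hnd))).
  by move=> s sk; rewrite !mxE [k == s]eq_sym (negbTE sk) mulr0.
have addE (f g : tensor R n d) y : (f + g) y = f y + g y by rewrite ffunE.
have subE (f g : tensor R n d) y : (f - g) y = f y - g y by rewrite !ffunE.
pose Dt := T2 - E.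
pose W (m : nat) : tensor R n d := E + \sum_(x <- take m (enum (tidx n d))) elem x (Dt x).
have W0 : cp_decomposable (W 0%N) r.
  have hE : cp_decomposable E n by exists A0, B0, C0.
  rewrite /W take0 big_nil addr0; exact: dec_pad hE (leq_trans hnd hdr).
have Wstep m s : cp_decomposable (W m) s -> cp_decomposable (W m.+1) (s + 1).
  move=> h; case: (ltnP m (size (enum (tidx n d)))) => hm.
    rewrite /W (take_nth (ord0, wd hnd ord0, ord0) hm) big_rcons /= addrA.
    exact: dec_add h (dec_elem _ _).
  have -> : W m.+1 = W m by rewrite /W !take_oversize // (leq_trans hm).
  by apply: (dec_pad h); rewrite addn1.
have WK : W (size (enum (tidx n d))) = T2.
  rewrite /W take_size.
  have -> : \sum_(x <- enum (tidx n d)) elem x (Dt x) = Dt.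
    apply/ffunP => y; rewrite sum_ffunE big_enum /= (bigD1 y) //= ffunE eqxx.
    rewrite big1 ?addr0 // => x xy; rewrite ffunE.
    by rewrite eq_sym (negbTE xy).
  by rewrite /Dt addrC subrK.
have Wblk m (j k : 'I_n) : W m (ord0, wd hnd j, k) = (j == k)%:R.
  rewrite /W addE sum_ffunE big1_seq ?addr0 ?Eblk // => x _.
  rewrite ffunE; case: eqP => // <-.
  by rewrite /Dt subE T2blk Eblk subrr.
have r0 : (0 < r)%N := leq_trans (leq_trans (ltn0Sn n') hnd) hdr.
have IVT m : cp_decomposable (W m) r \/ exists m', has_cp_rank (W m') r.
  elim: m => [|m [h|h]]; [by left | | by right].
  case: (classic (cp_decomposable (W m) r.-1)) => hr.
    by left; have := Wstep _ _ hr; rewrite addn1 prednK.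
  right; exists m; split => // s ls hs; apply: hr.
  by apply: (dec_pad hs); rewrite -ltnS prednK.
have [m' Hm'] : exists m', has_cp_rank (W m') r.
  case: (IVT (size (enum (tidx n d)))) => // h.
  exists (size (enum (tidx n d))); rewrite WK; split; first by rewrite -WK.
  case: HT2 => _ hmin s ls; apply: hmin; exact: leq_trans ls hrR.
have blk' := Wblk m'.
move: Hm' blk'; set Wt := W m' => Hm' blk'.
case: (Hm') => [[A [B [C eW]]] _].
pose h0 : 'cV[R]_n := \col_i (i == ord0)%:R.
exists A, B, C, h0; split; first by rewrite -eW.
set M := B *m diag_mx (A^T *m h0)^T *m C^T.
have ME j k : M j k = Wt (ord0, j, k).
  rewrite eW /M mul_mx_diag !mxE ffunE /=; apply: eq_bigr => s _.
  rewrite !mxE (bigD1 ord0) //= big1 ?addr0; last first.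
    by move=> i /negbTE ni; rewrite !mxE ni mulr0.
  by rewrite !mxE eqxx mulr1; ring.
clearbody M.
pose Lsel : 'M[R]_(n, d) := \matrix_(i, j) (j == wd hnd i)%:R.
have LselE (f : R -> R) (N : 'M[R]_(d, n)) : Lsel *m N = \matrix_(i, k) N (wd hnd i) k.
  apply/matrixP => i k; rewrite !mxE (bigD1 (wd hnd i)) //= big1 ?addr0; last first.
    by move=> j /negbTE nj; rewrite !mxE nj mul0r.
  by rewrite !mxE eqxx mul1r.
have rk (N : 'M[R]_(d, n)) (Lm : 'M[R]_(n, d)) : Lm *m N = 1%:M -> \rank N = n.
  move=> h; apply/eqP; rewrite eqn_leq rank_leq_col /=.
  by rewrite -{1}(mxrank1 R n) -h mxrankM_maxr.
split.
  apply: (rk _ Lsel); rewrite (LselE id); apply/matrixP => i k.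
  by rewrite [LHS]mxE ME blk' mxE.
apply: (rk _ ((tanhR 1)^-1 *: Lsel)); rewrite -scalemxAl (LselE id).
apply/matrixP => i k; rewrite !mxE ME blk'.
case: (i == k); first by rewrite mulVf // tanh1_neq0.
by rewrite tanh0 mulr0.
Qed.
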